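(* Let $d\ge 2$ and let $n$ be an integer with $1\le n<d$. Let $\{|\psi_k\rangle\}_{k=1}^{d^2}$ be a complete orthonormal basis of $\mathbb{C}^d\otimes\mathbb{C}^d$ consisting of maximally entangled states. Regard $\mathbb{C}^d\otimes\mathbb{C}^d$ as the subspace of $\mathbb{C}^d\otimes\mathbb{C}^{d+n}$ spanned by $|i\rangle|j\rangle$ with $0\le i,j\le d-1$ (where $\{|j\rangle\}_{j=0}^{d+n-1}$ is an orthonormal basis of $\mathbb{C}^{d+n}$). Then $\{|\psi_k\rangle\}_{k=1}^{d^2}$ is an unextendible maximally entangled basis of $\mathbb{C}^d\otimes\mathbb{C}^{d+n}$.
   Context: In $\mathbb{C}^{d_1}\otimes\mathbb{C}^{d_2}$ with $d_1\le d_2$, a pure state is maximally entangled if it has $d_1$ nonzero Schmidt coefficients, all equal (to $1/\sqrt{d_1}$). An unextendible maximally entangled basis (UMEB) of $\mathbb{C}^{d_1}\otimes\mathbb{C}^{d_2}$ is a set of mutually orthogonal maximally entangled states spanning a proper subspace of $\mathbb{C}^{d_1}\otimes\mathbb{C}^{d_2}$ such that the orthogonal complement of this span contains no maximally entangled state. *)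

(* Defs.v *)
From HB Require Import structures.
From mathcomp Require Import all_boot all_order all_algebra.
Set Implicit Arguments. Unset Strict Implicit. Unset Printing Implicit Defensive.
Import Order.TTheory GRing.Theory Num.Theory.
Local Open Scope ring_scope.

(* A vector |psi> = sum_{j,k} M j k |j>|k> of C^{d1} (x) C^{d2} is represented
   by its coefficient matrix M : 'M[C]_(d1,d2).  C is any numeric algebraically
   closed field (e.g. the complex numbers), with conjugation x^*. *)

Section QDefs.
Variable C : numClosedFieldType.

Definition adj (m n : nat) (A : 'M[C]_(m, n)) : 'M[C]_(n, m) := (map_mx Num.conj A)^T.

Definition hinner (d1 d2 : nat) (u v : 'M[C]_(d1, d2)) : C :=
  \sum_(j < d1) \sum_(k < d2) Num.conj (u j k) * v j k.

(* Maximally entangled (d1 <= d2): Schmidt decomposition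
   psi = sum_{i<d1} (1/sqrt d1) |a_i>|b_i> with {a_i} orthonormal in C^{d1}
   (columns of A) and {b_i} orthonormal in C^{d2} (rows of B), i.e. d1 nonzero
   Schmidt coefficients all equal to 1/sqrt d1. *)
Definition max_entangled (d1 d2 : nat) (M : 'M[C]_(d1, d2)) : Prop :=
  exists (A : 'M[C]_d1) (B : 'M[C]_(d1, d2)),
    adj A *m A = 1%:M /\ B *m adj B = 1%:M /\
    M = (sqrtC (d1%:R))^-1 *: (A *m B).

Definition in_span (I : finType) (d1 d2 : nat) (S : I -> 'M[C]_(d1, d2))
  (v : 'M[C]_(d1, d2)) : Prop :=
  exists c : I -> C, v = \sum_(i : I) c i *: S i.

Definition orthonormal (I : finType) (d1 d2 : nat) (S : I -> 'M[C]_(d1, d2)) : Prop :=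
  forall i j : I, hinner (S i) (S j) = (i == j)%:R.

Definition orthonormal_basis (I : finType) (d1 d2 : nat) (S : I -> 'M[C]_(d1, d2)) : Prop :=
  orthonormal S /\ forall v, in_span S v.

Definition UMEB (I : finType) (d1 d2 : nat) (S : I -> 'M[C]_(d1, d2)) : Prop :=
  [/\ (d1 <= d2)%N,
      (forall i, max_entangled (S i)),
      (forall i j, i != j -> hinner (S i) (S j) = 0),
      (exists v, ~ in_span S v) &
      (forall phi, (forall i, hinner (S i) phi = 0) -> ~ max_entangled phi)].

End QDefs.

(* Embedding C^d (x) C^d into C^d (x) C^{d+n} as span{|i>|j> : i,j <= d-1}:
   the coefficient matrix is padded with n zero columns. *)
Definition embed (C : numClosedFieldType) (d n : nat) (M : 'M[C]_d) : 'M[C]_(d, d + n) :=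
  row_mx M 0.

(* Main.v *)
Require Import Defs.
From mathcomp Require Import all_boot all_order all_algebra.
Import GRing.Theory Num.Theory.
Local Open Scope ring_scope.

Lemma hinner_row (C : numClosedFieldType) m n1 n2 (a c : 'M[C]_(m,n1)) (b e : 'M[C]_(m,n2)) :
  hinner (row_mx a b) (row_mx c e) = hinner a c + hinner b e.
Proof.
rewrite /hinner -big_split /=; apply: eq_bigr => j _; rewrite big_split_ord /=.
by congr (_ + _); apply: eq_bigr => k _; rewrite ?row_mxEl ?row_mxEr.
Qed.

Lemma hinner0l (C : numClosedFieldType) m n (u : 'M[C]_(m,n)) : hinner 0 u = 0.
Proof.
rewrite /hinner big1 // => j _; rewrite big1 // => k _.
by rewrite mxE rmorph0 mul0r.
Qed.

Lemma hinner_sumr (C : numClosedFieldType) (I : finType) m n (u : 'M[C]_(m,n))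
  (c : I -> C) (v : I -> 'M[C]_(m,n)) :
  hinner u (\sum_i c i *: v i) = \sum_i c i * hinner u (v i).
Proof.
rewrite /hinner.
transitivity (\sum_(j < m) \sum_(k < n) \sum_i c i * (Num.conj (u j k) * v i j k)).
  apply: eq_bigr => j _; apply: eq_bigr => k _; rewrite summxE mulr_sumr.
  by apply: eq_bigr => i _; rewrite mxE mulrCA.
under eq_bigr do rewrite exchange_big.
rewrite exchange_big; apply: eq_bigr => i _; rewrite mulr_sumr.
by apply: eq_bigr => j _; rewrite mulr_sumr.
Qed.

Lemma adj_row (C : numClosedFieldType) m n1 n2 (X : 'M[C]_(m,n1)) (Y : 'M[C]_(m,n2)) :
  adj (row_mx X Y) = col_mx (adj X) (adj Y).
Proof. by rewrite /adj map_row_mx tr_row_mx. Qed.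

Theorem proposition2 (C : numClosedFieldType) (d n : nat)
  (hd : (2 <= d)%N) (hn1 : (1 <= n)%N) (hnd : (n < d)%N)
  (psi : 'I_(d * d) -> 'M[C]_d) :
  orthonormal_basis psi ->
  (forall k, max_entangled (psi k)) ->
  UMEB (fun k => embed n (psi k)).
Proof.
move=> [orth span] me; split.
- by rewrite leq_addr.
- move=> k; case: (me k) => A [B [hA [hB ->]]]; exists A, (row_mx B 0); split => //.
    rewrite adj_row mul_row_col mul0mx addr0 hB.
  by rewrite /embed mul_mx_row mulmx0 scale_row_mx scaler0.
- move=> i j ij; rewrite /embed hinner_row hinner0l addr0 orth.
  by rewrite (negbTE ij).
- have d0 : (0 < d)%N by apply: leq_trans hd.
  exists (row_mx 0 (const_mx 1)); case=> c H.
  move/matrixP: H => /(_ (Ordinal d0) (rshift d (Ordinal hn1))).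
  rewrite row_mxEr mxE summxE big1 ?(@oner_eq0 C) //.
    by move=> /eqP; rewrite oner_eq0.
  by move=> i _; rewrite /embed mxE row_mxEr mxE mulr0.
- move=> phi orthphi [A [B [hA [hB ephi]]]].
  set L := lsubmx phi.
  have hL : forall k, hinner (psi k) L = 0.
    move=> k; have := orthphi k.
    by rewrite /embed -[phi in hinner _ phi](hsubmxK phi) hinner_row hinner0l addr0.
  have L0 : L = 0.
    case: (span L) => c hc.
    have cz : forall j, c j = 0.
      move=> j; have := hL j; rewrite hc hinner_sumr (bigD1 j) //= orth eqxx mulr1.
      rewrite big1 ?addr0 // => k kj; by rewrite orth eq_sym (negbTE kj) mulr0.
    by rewrite hc big1 // => j _; rewrite cz scale0r.
  have hLB : L = (sqrtC (d%:R))^-1 *: (A *m lsubmx B).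
    by rewrite /L ephi -[B in A *m B](hsubmxK B) mul_mx_row scale_row_mx row_mxKl.
  have s0 : sqrtC (d%:R : C) != 0.
    by rewrite sqrtC_eq0 pnatr_eq0 -lt0n (leq_trans _ hd).
  have AB0 : A *m lsubmx B = 0.
    have := congr1 (fun X => sqrtC (d%:R : C) *: X) hLB.
    by rewrite /= L0 scaler0 scalerA mulfV // scale1r.
  have B10 : lsubmx B = 0.
    by rewrite -[lsubmx B]mul1mx -hA -mulmxA AB0 mulmx0.
  rewrite -(hsubmxK B) B10 adj_row mul_row_col mul0mx add0r in hB.
  have := mxrankM_maxl (rsubmx B) (adj (rsubmx B)).
  rewrite hB mxrank1 => /leq_trans /(_ (rank_leq_col (rsubmx B))).
  by rewrite leqNgt hnd.
Qed.
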